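(* Let $\mathcal{X}$ be a sample space and $\mathcal{Y}$ a finite label space, let $(\boldsymbol{x}^n, \mathbf{y}^n) \in \mathcal{X} \times \mathcal{Y}$, $n = 1, \ldots, \ell$, be training instances, let $\Delta: \mathcal{Y} \times \mathcal{Y} \to \mathbb{R}_{\ge 0}$ satisfy $\Delta(\mathbf{y}, \mathbf{y}) = 0$ for all $\mathbf{y}$, let $\Psi: \mathcal{X} \times \mathcal{Y} \to \mathbb{R}^d$, and let $C > 0$. Writing $\hat{\boldsymbol{w}} = (\boldsymbol{w}, b) \in \mathbb{R}^{d} \times \mathbb{R}$ and $\hat{\Psi}(\boldsymbol{x}, \mathbf{y}) = (\Psi(\boldsymbol{x}, \mathbf{y}), 1) \in \mathbb{R}^{d+1}$, consider the two optimization problems over $(\hat{\boldsymbol{w}}, \boldsymbol{\xi}) \in \mathbb{R}^{d+1} \times \mathbb{R}^{\ell}$: $(P_2)$: minimize $\|\boldsymbol{w}\|^2 + C \sum_{n=1}^{\ell} \xi_n$ subject to $\hat{\boldsymbol{w}}^\top \hat{\Psi}(\boldsymbol{x}^n, \mathbf{y}^n) - \hat{\boldsymbol{w}}^\top \hat{\Psi}(\boldsymbol{x}^n, \mathbf{y}) + \xi_n \ge \Delta(\mathbf{y}^n, \mathbf{y})$ for all $n = 1, \ldots, \ell$ and all $\mathbf{y} \in \mathcal{Y}$; $(P_3)$: minimize the same objective subject to the same constraints together with the additional constraints $\hat{\boldsymbol{w}}^\top \hat{\Psi}(\boldsymbol{x}^n, \mathbf{y}) \ge 0$ for all $n = 1,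 \ldots, \ell$ and all $\mathbf{y} \in \mathcal{Y}$. If $(P_2)$ attains its minimum, then the optimal values of $(P_2)$ and $(P_3)$ are equal (and the minimum of $(P_3)$ is attained).
   Context: This is the structured SVM training problem with an additional unregularized bias coordinate $b$ (note the objective regularizes only $\boldsymbol{w}$, not $b$); $(P_3)$ additionally requires that all scores $\hat{\boldsymbol{w}}^\top \hat{\Psi}(\boldsymbol{x}^n, \mathbf{y})$ be nonnegative. *)

(* Defs.v *)
From HB Require Import structures.
From mathcomp Require Import all_boot all_order all_algebra.
From mathcomp Require Import reals.
Set Implicit Arguments. Unset Strict Implicit. Unset Printing Implicit Defensive.
Import Order.TTheory GRing.Theory Num.Theory.
Local Open Scope ring_scope.

Section SSVM.
Variables (R : realType) (X : Type) (Y : finType) (d ell : nat).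
Variables (x : 'I_ell -> X) (y : 'I_ell -> Y) (Delta : Y -> Y -> R)
          (Psi : X -> Y -> 'rV[R]_d) (C : R).

Definition score (w : 'rV[R]_d) (b : R) (x0 : X) (y0 : Y) : R :=
  \sum_(i < d) w 0 i * Psi x0 y0 0 i + b.

Definition objective (w : 'rV[R]_d) (xi : 'rV[R]_ell) : R :=
  \sum_(i < d) w 0 i ^+ 2 + C * \sum_(n < ell) xi 0 n.

Definition feasible2 (w : 'rV[R]_d) (b : R) (xi : 'rV[R]_ell) : Prop :=
  forall (n : 'I_ell) (y0 : Y),
    score w b (x n) (y n) - score w b (x n) y0 + xi 0 n >= Delta (y n) y0.

Definition feasible3 (w : 'rV[R]_d) (b : R) (xi : 'rV[R]_ell) : Prop :=
  feasible2 w b xi /\ forall (n : 'I_ell) (y0 : Y), score w b (x n) y0 >= 0.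

Definition is_minimizer (F : 'rV[R]_d -> R -> 'rV[R]_ell -> Prop)
    (w : 'rV[R]_d) (b : R) (xi : 'rV[R]_ell) : Prop :=
  F w b xi /\ forall w' b' xi', F w' b' xi' -> objective w xi <= objective w' xi'.
End SSVM.

(* Main.v *)
Require Import Defs.
From HB Require Import structures.
From mathcomp Require Import all_boot all_order all_algebra.
From mathcomp Require Import reals.
Import Order.TTheory GRing.Theory Num.Theory.
Local Open Scope ring_scope.

Theorem claim2 (R : realType) (X : Type) (Y : finType) (d ell : nat)
    (x : 'I_ell -> X) (y : 'I_ell -> Y) (Delta : Y -> Y -> R)
    (Psi : X -> Y -> 'rV[R]_d) (C : R)
    (HDelta_nonneg : forall y1 y2 : Y, 0 <= Delta y1 y2)
    (HDelta_diag : forall y0 : Y, Delta y0 y0 = 0)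
    (HC : 0 < C) :
  (exists w b xi, is_minimizer C (feasible2 x y Delta Psi) w b xi) ->
  exists w2 b2 xi2 w3 b3 xi3,
    is_minimizer C (feasible2 x y Delta Psi) w2 b2 xi2 /\
    is_minimizer C (feasible3 x y Delta Psi) w3 b3 xi3 /\
    objective C w2 xi2 = objective C w3 xi3.
Proof.
move=> [w [b [xi [Hf Hmin]]]].
set M := \sum_(n < ell) \sum_(y0 : Y) `|score Psi w b (x n) y0|.
have sc : forall x0 y0, score Psi w (b + M) x0 y0 = score Psi w b x0 y0 + M.
  by move=> x0 y0; rewrite /score addrA.
exists w, b, xi, w, (b + M), xi; split; first by split.
split=> //; split.
  split.
    move=> n y0; rewrite !sc (_ : forall a c : R, a + M - (c + M) = a - c); [exact: Hf|by move=> a c; rewrite opprD addrACA subrr addr0].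
  move=> n y0; rewrite sc.
  have H1 : `|score Psi w b (x n) y0| <= M.
    apply: le_trans (_ : \sum_(y1 : Y) `|score Psi w b (x n) y1| <= M).
      rewrite (bigD1 y0) //= lerDl; apply: sumr_ge0 => *; exact: normr_ge0.
    rewrite /M (bigD1 n) //= lerDl; apply: sumr_ge0 => *; apply: sumr_ge0 => *; exact: normr_ge0.
  rewrite -lerBlDr sub0r; apply: le_trans (_ : - `|score Psi w b (x n) y0| <= _); [by rewrite lerN2 | by rewrite lerNl ler_normr lexx orbT].
move=> w' b' xi' [H' _]; exact: Hmin.
Qed.
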